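(* Let $N\ge3$, $p>p_S$, and let $y^*$ be the unique solution of $y''+\alpha y'-y+y^p-m^2e^{2mt}y=0$ with $y(t)\to1$ as $t\to-\infty$. Then, with $\nu:=\min\{p-1,1\}$, \[ (y^* )'(t)=\frac{m}{2(N-1)-3\theta}e^{2mt}+O\big(e^{2m(1+\nu)t}\big)\quad(t\to-\infty). \]
   Context: $\theta:=\frac{2}{p-1}$, $m:=\{\theta(N-2-\theta)\}^{-1/2}$, $\alpha:=m(N-2-2\theta)$, $p_S:=\frac{N+2}{N-2}$. *)

(* Defs.v *)
From Stdlib Require Import Reals.
Open Scope R_scope.

Definition theta (p : R) : R := 2 / (p - 1).
Definition mm (N : nat) (p : R) : R :=
  / sqrt (theta p * (INR N - 2 - theta p)).
Definition alpha (N : nat) (p : R) : R :=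
  mm N p * (INR N - 2 - 2 * theta p).
Definition pS (N : nat) : R := (INR N + 2) / (INR N - 2).

(* Main.v *)
Require Import Defs.
From Stdlib Require Import Reals Lra Psatz.
Open Scope R_scope.


Lemma expl x y : x <= y -> exp x <= exp y.
Proof. intros [H|H]; [left; apply exp_increasing; auto | subst; lra]. Qed.

Lemma dmul f g x a b : derivable_pt_lim f x a -> derivable_pt_lim g x b ->
  derivable_pt_lim (fun t => f t * g t) x (a * g x + f x * b).
Proof. intros. apply (derivable_pt_lim_mult f g x a b); auto. Qed.
Lemma dplus f g x a b : derivable_pt_lim f x a -> derivable_pt_lim g x b ->
  derivable_pt_lim (fun t => f t + g t) x (a + b).
Proof. intros. apply (derivable_pt_lim_plus f g x a b); auto. Qed.
Lemma dminus f g x a b : derivable_pt_lim f x a -> derivable_pt_lim g x b ->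
  derivable_pt_lim (fun t => f t - g t) x (a - b).
Proof. intros. apply (derivable_pt_lim_minus f g x a b); auto. Qed.
Lemma dconst c x : derivable_pt_lim (fun _ => c) x 0.
Proof. apply (derivable_pt_lim_const c x). Qed.
Lemma did x : derivable_pt_lim (fun t => t) x 1.
Proof. apply (derivable_pt_lim_id x). Qed.
Lemma dscal c f x a : derivable_pt_lim f x a -> derivable_pt_lim (fun t => c * f t) x (c * a).
Proof. intros. replace (c*a) with (0 * f x + c * a) by ring. apply dmul; auto. apply dconst. Qed.
Lemma dexpl k x : derivable_pt_lim (fun t => exp (k * t)) x (k * exp (k * x)).
Proof.
  replace (k * exp (k*x)) with (exp (k*x) * k) by ring.
  apply (derivable_pt_lim_comp (fun t => k * t) exp x k (exp (k*x))).
  pose proof (dscal k _ x 1 (did x)) as H; rewrite Rmult_1_r in H; exact H.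
  apply derivable_pt_lim_exp.
Qed.
Lemma dext f g x l l' : (forall t, f t = g t) -> l = l' -> derivable_pt_lim f x l -> derivable_pt_lim g x l'.
Proof. intros H -> D eps He. destruct (D eps He) as [d Hd]. exists d. intros h H1 H2.
  rewrite <- !H. auto. Qed.
Lemma Rabs_le_between x a : Rabs x <= a -> -a <= x <= a.
Proof. unfold Rabs; destruct (Rcase_abs x); intros; lra. Qed.

Lemma nonincr (phi phi' : R -> R) T :
  (forall t, t < T -> derivable_pt_lim phi t (phi' t)) ->
  (forall t, t < T -> phi' t <= 0) ->
  forall s t, s <= t -> t < T -> phi t <= phi s.
Proof.
  intros D N s t [Hst|Hst] HT; [|subst; lra].
  destruct (MVT_cor2 phi phi' s t Hst) as [c [E Hc]].
  { intros c Hc. apply D. lra. }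
  assert (phi' c <= 0) by (apply N; lra).
  assert (phi' c * (t - s) <= 0) by nra. lra.
Qed.

Lemma mvt_bound (f f' : R -> R) a b M :
  (forall c, Rmin a b <= c <= Rmax a b -> derivable_pt_lim f c (f' c)) ->
  (forall c, Rmin a b <= c <= Rmax a b -> Rabs (f' c) <= M) ->
  Rabs (f b - f a) <= M * Rabs (b - a).
Proof.
  intros D B.
  destruct (Rtotal_order a b) as [H|[H|H]].
  - destruct (MVT_cor2 f f' a b H) as [c [E Hc]].
    { intros c Hc. apply D. unfold Rmin, Rmax; destruct (Rle_dec a b); lra. }
    rewrite E, Rabs_mult. apply Rmult_le_compat_r. apply Rabs_pos.
    apply B. unfold Rmin, Rmax; destruct (Rle_dec a b); lra.
  - subst. replace (f b - f b) with 0 by ring. replace (b-b) with 0 by ring.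
    rewrite Rabs_R0. assert (0 <= M). { eapply Rle_trans. apply Rabs_pos. apply (B b).
    unfold Rmin, Rmax; destruct (Rle_dec b b); lra. } lra.
  - destruct (MVT_cor2 f f' b a H) as [c [E Hc]].
    { intros c Hc. apply D. unfold Rmin, Rmax; destruct (Rle_dec a b); lra. }
    replace (f b - f a) with (- (f a - f b)) by ring. replace (b - a) with (-(a-b)) by ring.
    rewrite !Rabs_Ropp.
    rewrite E, Rabs_mult. apply Rmult_le_compat_r. apply Rabs_pos.
    apply B. unfold Rmin, Rmax; destruct (Rle_dec a b); lra.
Qed.

Lemma lnle x y : 0 < x -> x <= y -> ln x <= ln y.
Proof. intros H [H1|H1]; [left; apply ln_increasing; auto | subst; lra]. Qed.

Lemma ln_bd b : 1/2 <= b <= 3/2 -> Rabs (ln b) <= 1.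
Proof.
  intros Hb. pose proof (exp_ineq1_le 1). pose proof (exp_pos 1).
  apply Rabs_le; split.
  - rewrite <- (ln_exp (- (1))). apply lnle. apply exp_pos. rewrite exp_Ropp.
    apply Rle_trans with (/2). apply Rinv_le_contravar; lra. lra.
  - apply Rle_trans with (ln (exp 1)); [apply lnle; lra | rewrite ln_exp; lra].
Qed.

Lemma rpow_bd b e : 1/2 <= b <= 3/2 -> Rabs (Rpower b e) <= exp (Rabs e).
Proof.
  intros Hb. unfold Rpower. rewrite Rabs_right by (left; apply exp_pos).
  apply expl. pose proof (ln_bd b Hb).
  apply Rle_trans with (Rabs (e * ln b)). apply Rle_abs. rewrite Rabs_mult.
  pose proof (Rabs_pos e). pose proof (Rabs_pos (ln b)). nra.
Qed.

Lemma d_rpow1 e u : 0 < 1 + u ->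
  derivable_pt_lim (fun x => Rpower (1 + x) e) u (e * Rpower (1+u) (e-1)).
Proof.
  intros H. replace (e * Rpower (1+u) (e-1)) with ((e * Rpower (1+u) (e-1)) * 1) by ring.
  apply (derivable_pt_lim_comp (fun x => 1 + x) (fun x => Rpower x e) u 1).
  pose proof (dplus _ _ u _ _ (dconst 1 u) (did u)) as H'; rewrite Rplus_0_l in H'; exact H'.
  apply derivable_pt_lim_power. auto.
Qed.

Lemma rpow1_lip e : exists M, 0 <= M /\ forall x, Rabs x <= 1/2 -> Rabs (Rpower (1+x) e - 1) <= M * Rabs x.
Proof.
  exists (Rabs e * exp (Rabs (e-1))). split.
  { pose proof (Rabs_pos e); pose proof (exp_pos (Rabs (e-1))); nra. }
  intros x Hx.
  assert (E1: Rpower (1+0) e = 1) by (replace (1+0) with 1 by ring; unfold Rpower; rewrite ln_1, Rmult_0_r, exp_0; auto).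
  replace (Rpower (1+x) e - 1) with (Rpower (1+x) e - Rpower (1+0) e) by (rewrite E1; ring). replace (Rabs x) with (Rabs (x - 0)) by (f_equal; ring).
  apply (mvt_bound (fun x => Rpower (1+x) e) (fun u => e * Rpower (1+u) (e-1))).
  - intros c Hc. apply d_rpow1. apply Rabs_le_between in Hx. unfold Rmin, Rmax in Hc.
    destruct (Rle_dec 0 x); lra.
  - intros c Hc. apply Rabs_le_between in Hx. rewrite Rabs_mult. apply Rmult_le_compat_l.
    apply Rabs_pos. apply rpow_bd. unfold Rmin, Rmax in Hc. destruct (Rle_dec 0 x); lra.
Qed.

Lemma R_quad p : 1 < p -> exists K, 0 <= K /\ forall z, Rabs z <= 1/2 ->
  Rabs (Rpower (1+z) p - 1 - p * z) <= K * (z*z).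
Proof.
  intros Hp. destruct (rpow1_lip (p-1)) as [M [HM HL]].
  exists (Rabs p * M). split. { pose proof (Rabs_pos p); nra. }
  intros z Hz.
  set (g := fun x => Rpower (1+x) p - 1 - p * x).
  assert (E0: g 0 = 0) by (unfold g; replace (1+0) with 1 by ring; unfold Rpower; rewrite ln_1, Rmult_0_r, exp_0; ring).
  change (Rabs (g z) <= Rabs p * M * (z*z)).
  replace (g z) with (g z - g 0) by (rewrite E0; ring).
  replace (z*z) with (Rabs z * Rabs (z - 0)) by (rewrite Rminus_0_r, <- Rabs_mult, Rabs_right; nra).
  rewrite <- Rmult_assoc.
  apply (mvt_bound g (fun u => p * Rpower (1+u) (p-1) - p)).
  - intros c Hc. unfold g. apply (dext (fun x => (Rpower (1+x) p - 1) - p*x) _ c ((p*Rpower (1+c)(p-1) - 0) - p*1)); [intro; reflexivity | ring | ].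
    apply dminus. apply dminus. apply d_rpow1.
    apply Rabs_le_between in Hz. unfold Rmin, Rmax in Hc. destruct (Rle_dec 0 z); lra.
    apply dconst. apply dscal, did.
  - intros c Hc. replace (p * Rpower (1+c) (p-1) - p) with (p * (Rpower (1+c) (p-1) - 1)) by ring.
    rewrite Rabs_mult, Rmult_assoc. apply Rmult_le_compat_l. apply Rabs_pos.
    assert (Rabs c <= Rabs z). { unfold Rmin, Rmax in Hc. apply Rabs_le.
      destruct (Rle_dec 0 z); [rewrite Rabs_right|rewrite Rabs_left]; lra. }
    eapply Rle_trans. apply HL. lra. apply Rmult_le_compat_l; lra.
Qed.

Lemma absq x : Rabs x * Rabs x = x * x.
Proof. rewrite <- Rabs_mult. apply Rabs_right. apply Rle_ge, Rle_0_sqr. Qed.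

Lemma key_ineq a P eta z w F G :
  0 < a -> 0 < P -> 0 <= eta -> eta <= 1 ->
  eta <= a*P/(8*(2/a + a/(2*P))) -> 0 <= G ->
  Rabs F <= eta * Rabs z + G ->
  a*P/(6*(P+a*a)) * (w*w + a*(z*w) + (P + a*a/2)*(z*z))
   + (-a*(w*w) - a*P*(z*z) + F*(2*w + a*z))
  <= 2*(2/a + a/(2*P)) * (G*G).
Proof.
  intros Ha HP He0 He1 He HG HF.
  set (K := 2/a + a/(2*P)).
  assert (HK: 0 < K) by (unfold K; apply Rplus_lt_0_compat; apply Rdiv_lt_0_compat; lra).
  assert (s1a: 2*F*w <= a/2*(w*w) + 2/a*(F*F)).
  { assert (0 <= a/2*((w - 2/a*F)*(w - 2/a*F))).
    { apply Rmult_le_pos. lra. apply Rle_0_sqr. }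
    replace (a/2*((w - 2/a*F)*(w - 2/a*F))) with (a/2*(w*w) - 2*F*w + 2/a*(F*F)) in H
      by (field; lra). lra. }
  assert (s1b: a*F*z <= a*P/2*(z*z) + a/(2*P)*(F*F)).
  { assert (0 <= a*P/2*((z - F/P)*(z - F/P))).
    { apply Rmult_le_pos. apply Rmult_le_pos; [|]; nra. apply Rle_0_sqr. }
    replace (a*P/2*((z - F/P)*(z - F/P))) with (a*P/2*(z*z) - a*F*z + a/(2*P)*(F*F)) in H
      by (field; lra). lra. }
  assert (s2: F*F <= 2*(eta*eta)*(z*z) + 2*(G*G)).
  { assert (Rabs F * Rabs F <= (eta*Rabs z + G)*(eta*Rabs z + G)).
    { apply Rmult_le_compat; try apply Rabs_pos; auto. }
    rewrite absq in H. pose proof (absq z).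
    pose proof (Rle_0_sqr (eta*Rabs z - G)). unfold Rsqr in *. nra. }
  assert (s3: 0 <= a*P/(6*(P+a*a))) by (left; apply Rdiv_lt_0_compat; nra).
  assert (s3b: w*w + a*(z*w) + (P + a*a/2)*(z*z) <= 3/2*(w*w) + (P+a*a)*(z*z)).
  { assert (0 <= (w - a*z)*(w-a*z)) by apply Rle_0_sqr. nra. }
  assert (s3c: a*P/(6*(P+a*a)) * (3/2*(w*w) + (P+a*a)*(z*z)) <= a/4*(w*w) + a*P/4*(z*z)).
  { replace (a*P/(6*(P+a*a)) * (3/2*(w*w) + (P+a*a)*(z*z))) with
      ((a/4)*(P/(P+a*a))*(w*w) + a*P/6*(z*z)) by (field; nra).
    assert (P/(P+a*a) <= 1). { apply Rmult_le_reg_r with (P+a*a). nra.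
      unfold Rdiv. rewrite Rmult_assoc, Rinv_l by nra. nra. }
    assert (0 <= w*w) by apply Rle_0_sqr. assert (0<= z*z) by apply Rle_0_sqr.
    assert ((a/4)*(P/(P+a*a))*(w*w) <= a/4*(w*w)).
    { replace ((a/4)*(P/(P+a*a))*(w*w)) with ((a/4*(w*w))*(P/(P+a*a))) by ring.
      assert (0 <= a/4*(w*w)) by nra. nra. }
    assert (a*P/6*(z*z) <= a*P/4*(z*z)) by (apply Rmult_le_compat_r; nra). lra. }
  assert (s4: 2*K*(eta*eta) <= a*P/4).
  { assert (eta*eta <= eta) by nra.
    assert (K*eta <= a*P/8).
    { apply Rle_trans with (K*(a*P/(8*K))). apply Rmult_le_compat_l; [lra| unfold K in *; lra].
      right; field; lra. }
    nra. }
  assert (0<= z*z) by apply Rle_0_sqr. assert (0 <= w*w) by apply Rle_0_sqr.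
  assert (s3d: a*P/(6*(P+a*a)) * (w*w + a*(z*w) + (P + a*a/2)*(z*z)) <= a/4*(w*w) + a*P/4*(z*z)).
  { eapply Rle_trans; [|apply s3c]. apply Rmult_le_compat_l; auto. }
  fold K.
  assert (K*(F*F) <= K*(2*(eta*eta)*(z*z) + 2*(G*G))) by (apply Rmult_le_compat_l; lra).
  assert (2*K*(eta*eta)*(z*z) <= a*P/4*(z*z)) by (apply Rmult_le_compat_r; lra).
  unfold K in *. nra.
Qed.

Lemma sq_to_abs x D y : 0 <= D -> 0 <= y -> x*x <= D*(y*y) -> Rabs x <= sqrt D * y.
Proof.
  intros HD Hy H. rewrite <- sqrt_Rsqr_abs. unfold Rsqr.
  rewrite <- (sqrt_square y Hy), <- sqrt_mult by nra.
  apply sqrt_le_1_alt. nra.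
Qed.

Lemma lin_decay a P : 0 < a -> 0 < P -> exists eta0, 0 < eta0 /\
  forall (z w F : R -> R) T Z B beta eta,
  0 <= eta <= eta0 -> 0 <= beta -> 0 <= B ->
  (forall t, t < T -> derivable_pt_lim z t (w t)) ->
  (forall t, t < T -> derivable_pt_lim w t (-P * z t - a * w t + F t)) ->
  (forall t, t < T -> Rabs (z t) <= Z) ->
  (forall t, t < T -> Rabs (F t) <= eta * Rabs (z t) + B * exp (beta * t)) ->
  exists E, 0 <= E /\ forall t, t < T ->
    Rabs (w t) <= E * exp (beta * t) /\ Rabs (z t) <= E * exp (beta * t).
Proof.
  intros Ha HP.
  set (K := 2/a + a/(2*P)).
  assert (HK: 0 < K) by (unfold K; apply Rplus_lt_0_compat; apply Rdiv_lt_0_compat; lra).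
  exists (Rmin 1 (a*P/(8*K))). split.
  { apply Rmin_pos. lra. apply Rdiv_lt_0_compat; nra. }
  intros z w F T Z B beta eta Heta Hbeta HB Dz Dw Bz BF.
  set (c := a*P/(6*(P+a*a))).
  assert (Hc: 0 < c) by (unfold c; apply Rdiv_lt_0_compat; nra).
  set (E := 2*K*(B*B)/(c + 2*beta)).
  assert (HE: 0 <= E) by (unfold E; apply Rmult_le_pos; [nra| left; apply Rinv_0_lt_compat; lra]).
  set (V := fun t => w t * w t + a*(z t * w t) + (P + a*a/2)*(z t * z t)).
  set (ex := fun t => exp (beta * t)).
  set (phi := fun t => exp (c*t) * (V t - E * (ex t * ex t))).
  set (V' := fun t => -a*(w t*w t) - a*P*(z t*z t) + F t*(2*w t + a*z t)).
  assert (DV: forall t, t < T -> derivable_pt_lim V t (V' t)).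
  { intros t Ht. pose proof (Dz t Ht) as D1. pose proof (Dw t Ht) as D2.
    unfold V, V'.
    apply (dext (fun t => (w t * w t + a*(z t * w t)) + (P + a*a/2)*(z t * z t)) _ t
      (((-P * z t - a * w t + F t) * w t + w t * (-P * z t - a * w t + F t))
       + a * (w t * w t + z t * (-P * z t - a * w t + F t))
       + (P + a*a/2) * (w t * z t + z t * w t))).
    intro; reflexivity. cbv beta. field.
    apply dplus. apply dplus. apply dmul; auto. apply dscal. apply dmul; auto.
    apply dscal. apply dmul; auto. }
  assert (Dphi: forall t, t < T -> derivable_pt_lim phi t
     (c * exp (c*t) * (V t - E*(ex t*ex t)) + exp (c*t) * (V' t - E*(beta*ex t*ex t + ex t*(beta*ex t))))).
  { intros t Ht. unfold phi.
    apply (dmul (fun t => exp (c*t)) (fun t => V t - E*(ex t*ex t))). apply dexpl.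
    apply (dminus V (fun t => E*(ex t*ex t))). apply DV; auto.
    apply (dscal E (fun t => ex t * ex t)). apply (dmul ex ex); apply dexpl. }
  assert (Nphi: forall t, t < T ->
     c * exp (c*t) * (V t - E*(ex t*ex t)) + exp (c*t) * (V' t - E*(beta*ex t*ex t + ex t*(beta*ex t))) <= 0).
  { intros t Ht.
    pose proof (key_ineq a P eta (z t) (w t) (F t) (B * ex t) Ha HP ltac:(lra)
       ltac:(pose proof (Rmin_l 1 (a*P/(8*K))); lra)
       ltac:(pose proof (Rmin_r 1 (a*P/(8*K))); fold K; lra)
       ltac:(unfold ex; pose proof (exp_pos (beta*t)); nra) (BF t Ht)) as KI.
    fold K c in KI. fold (V t) in KI.
    assert (Hx: 0 < exp (c*t)) by apply exp_pos.
    assert (E*(c+2*beta) = 2*K*(B*B)) by (unfold E; field; lra).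
    replace (c * exp (c*t) * (V t - E*(ex t*ex t)) + exp (c*t) * (V' t - E*(beta*ex t*ex t + ex t*(beta*ex t))))
      with (exp (c*t) * ((c*V t + V' t) - E*(c+2*beta)*(ex t * ex t))) by ring.
    assert (c*V t + V' t - E*(c+2*beta)*(ex t * ex t) <= 0).
    { unfold V' in *. rewrite H. nra. }
    nra. }
  assert (Pneg: forall t, t < T -> phi t <= 0).
  { intros t0 Ht0. destruct (Rle_dec (phi t0) 0) as [|Hp]; auto. exfalso.
    apply Rnot_le_lt in Hp.
    assert (HZ: 0 <= Z) by (pose proof (Bz t0 Ht0); pose proof (Rabs_pos (z t0)); lra).
    set (Q := (3/2 + (P+a*a)*(Z*Z)) / phi t0).
    assert (HQ: 0 < Q) by (unfold Q; apply Rdiv_lt_0_compat; nra).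
    set (s1 := Rmin t0 (- ln Q / c)).
    assert (Hw: forall s, s <= s1 -> 1 <= w s * w s).
    { intros s Hs. unfold s1 in Hs.
      assert (Hs0: s <= t0) by (pose proof (Rmin_l t0 (- ln Q / c)); lra).
      assert (Hs2: s <= - ln Q / c) by (pose proof (Rmin_r t0 (- ln Q / c)); lra).
      pose proof (nonincr phi _ T Dphi Nphi s t0 Hs0 Ht0) as Hm.
      assert (HeQ: Q <= exp (- c * s)).
      { rewrite <- (exp_ln Q HQ). apply expl.
        apply Rmult_le_compat_r with (r := c) in Hs2; [|lra].
        unfold Rdiv in Hs2. rewrite Rmult_assoc, Rinv_l in Hs2 by lra. lra. }
      assert (Hex: exp (c*s) * exp (-c*s) = 1) by (rewrite <- exp_plus; replace (c*s + -c*s) with 0 by ring; apply exp_0).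
      assert (HV: phi t0 * Q <= V s).
      { unfold phi in Hm.
        assert (0 <= E*(ex s*ex s)) by (unfold ex; pose proof (exp_pos (beta*s)); apply Rmult_le_pos; nra).
        assert (phi t0 * exp (-c*s) <= V s - E*(ex s * ex s)).
        { apply Rle_trans with (exp (c*s) * (V s - E * (ex s * ex s)) * exp (-c*s)).
          apply Rmult_le_compat_r. left; apply exp_pos. auto.
          right. replace (exp (c*s) * (V s - E * (ex s * ex s)) * exp (-c*s)) with
            ((exp (c*s) * exp (-c*s)) * (V s - E * (ex s * ex s))) by ring. rewrite Hex. ring. }
        assert (phi t0 * Q <= phi t0 * exp (-c*s)) by (apply Rmult_le_compat_l; lra).
        lra. }
      assert (phi t0 * Q = 3/2 + (P+a*a)*(Z*Z)) by (unfold Q; field; lra).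
      assert (Hzs: z s * z s <= Z*Z).
      { assert (s < T) by lra. pose proof (Bz s H0). rewrite <- absq.
        pose proof (Rabs_pos (z s)). nra. }
      assert (V s <= 3/2*(w s*w s) + (P+a*a)*(z s*z s)).
      { unfold V. assert (0 <= (w s - a*z s)*(w s - a*z s)) by apply Rle_0_sqr. nra. }
      nra. }
    set (s0 := s1 - (2*Z+1)).
    assert (Hs01: s0 < s1) by (unfold s0; lra).
    assert (Hs1T: s1 < T) by (pose proof (Rmin_l t0 (- ln Q / c)); unfold s1; lra).
    destruct (MVT_cor2 z w s0 s1 Hs01) as [xi [Exi Hxi]].
    { intros u Hu. apply Dz. lra. }
    pose proof (Hw xi ltac:(lra)) as Hwxi.
    assert (1 <= Rabs (w xi)). { rewrite <- absq in Hwxi. pose proof (Rabs_pos (w xi)). nra. }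
    assert (Rabs (z s1 - z s0) >= 2*Z+1).
    { rewrite Exi, Rabs_mult. rewrite (Rabs_right (s1 - s0)) by lra. unfold s0 in *. nra. }
    pose proof (Bz s1 Hs1T). pose proof (Bz s0 ltac:(lra)).
    pose proof (Rabs_triang (z s1) (- z s0)). rewrite Rabs_Ropp in H3. unfold Rminus in H0. lra. }
  assert (HVb: forall t, t < T -> V t <= E * (ex t * ex t)).
  { intros t Ht. pose proof (Pneg t Ht). unfold phi in H. pose proof (exp_pos (c*t)). nra. }
  exists (sqrt ((2 + /P) * E)). split. apply sqrt_pos.
  intros t Ht. pose proof (HVb t Ht) as HV. unfold V in HV.
  assert (Hl: w t * w t / 2 + P * (z t * z t) <= V t).
  { unfold V. assert (0 <= (w t + a * z t) * (w t + a*z t)) by apply Rle_0_sqr.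
    pose proof (Rle_0_sqr (w t)). nra. }
  unfold V in Hl.
  assert (Hiv: 0 < /P) by (apply Rinv_0_lt_compat; lra).
  assert (Hee: 0 <= ex t * ex t) by (unfold ex; pose proof (exp_pos (beta*t)); nra).
  assert (HEe: 0 <= E*(ex t*ex t)) by (apply Rmult_le_pos; lra).
  split; apply sq_to_abs; try (apply Rmult_le_pos; lra); try (left; apply exp_pos); fold (ex t).
  - pose proof (Rle_0_sqr (z t)). unfold Rsqr in *.
    assert (E*(ex t*ex t)*/P >= 0) by (apply Rle_ge, Rmult_le_pos; lra). nra.
  - pose proof (Rle_0_sqr (w t)). unfold Rsqr in *.
    assert (P * (z t * z t) <= E*(ex t*ex t)) by nra.
    assert (z t * z t <= E*(ex t*ex t) * /P).
    { apply Rmult_le_reg_l with P. lra. replace (P*(E*(ex t*ex t)*/P)) with (E*(ex t*ex t)) by (field; lra). lra. }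
    assert (E*(ex t*ex t)*2 >= 0) by nra. nra.
Qed.
Theorem lemma4p5 (N : nat) (p : R) (y y1 y2 : R -> R) :
  (3 <= N)%nat ->
  pS N < p ->
  (exists T : R, forall t : R, t < T ->
     0 < y t /\
     derivable_pt_lim y t (y1 t) /\
     derivable_pt_lim y1 t (y2 t) /\
     y2 t + alpha N p * y1 t - y t + Rpower (y t) p
       - (mm N p) ^ 2 * exp (2 * mm N p * t) * y t = 0) ->
  (forall eps : R, 0 < eps -> exists M : R, forall t : R, t < M ->
     Rabs (y t - 1) < eps) ->
  exists C T' : R, forall t : R, t < T' ->
    Rabs (y1 t - mm N p / (2 * (INR N - 1) - 3 * theta p)
                   * exp (2 * mm N p * t))
      <= C * exp (2 * mm N p * (1 + Rmin (p - 1) 1) * t).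
Proof.
  intros HN Hp [T0 HT0] Hlim.
  assert (Hn: 3 <= INR N) by (replace 3 with (INR 3) by (simpl; ring); apply le_INR; auto).
  unfold pS in Hp.
  set (n := INR N) in *.
  assert (Hp1: 4 < (p-1)*(n-2)).
  { apply Rmult_lt_compat_r with (r := n-2) in Hp; [|lra].
    unfold Rdiv in Hp. rewrite Rmult_assoc, Rinv_l in Hp by lra. lra. }
  assert (HP: 0 < p - 1) by nra.
  set (P := p - 1) in *.
  set (th := theta p).
  assert (Hth: th * P = 2) by (unfold th, theta; fold P; field; lra).
  assert (Hth0: 0 < th) by (unfold th, theta; fold P; apply Rdiv_lt_0_compat; lra).
  assert (Hth1: 2*th < n - 2) by nra.
  set (D := 2*(n-1) - 3*th).
  assert (HD: 0 < D) by (unfold D; lra).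
  set (m := mm N p).
  assert (Hq: 0 < th * (n - 2 - th)) by nra.
  assert (Hm: 0 < m) by (unfold m, mm; fold n th; apply Rinv_0_lt_compat, sqrt_lt_R0; auto).
  assert (Hmm: m*m*(th*(n-2-th)) = 1).
  { unfold m, mm; fold n th. rewrite <- Rinv_mult, sqrt_sqrt by lra. field. lra. }
  set (a := alpha N p).
  assert (Ha: a = m*(n-2-2*th)) by reflexivity.
  assert (Hapos: 0 < a) by (rewrite Ha; apply Rmult_lt_0_compat; lra).
  assert (HPm: P = 2*(m*m)*(n-2-th)).
  { transitivity (P*(m*m*(th*(n-2-th)))). rewrite Hmm; ring.
    replace (P*(m*m*(th*(n-2-th)))) with ((th*P)*(m*m)*(n-2-th)) by ring. rewrite Hth. ring. }
  set (A := / (2*D)).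
  assert (Hid: (P + 2*m*a + 4*(m*m))*A = m*m).
  { unfold A. rewrite HPm, Ha. unfold D. field. fold D. lra. }
  assert (HA: 0 < A) by (unfold A; apply Rinv_0_lt_compat; lra).
  assert (H2mA: 2*m*A = m / D) by (unfold A; field; lra).
  destruct (lin_decay a P Hapos HP) as [eta0 [Heta0 LD]].
  destruct (R_quad p ltac:(unfold P in HP; lra)) as [KR [HKR RQ]].
  set (delta := Rmin (1/2) (eta0/(KR+1))).
  assert (Hdel: 0 < delta) by (apply Rmin_pos; [lra | apply Rdiv_lt_0_compat; lra]).
  assert (Hdel1: delta <= 1/2) by apply Rmin_l.
  assert (Hdel2: KR * delta <= eta0).
  { apply Rle_trans with (KR * (eta0/(KR+1))). apply Rmult_le_compat_l; auto; apply Rmin_r.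
    apply Rmult_le_reg_r with (KR+1). lra. replace (KR * (eta0/(KR+1)) * (KR+1)) with (KR*eta0) by (field; lra).
    nra. }
  destruct (Hlim delta Hdel) as [M HM].
  set (T1 := Rmin (Rmin T0 M) 0).
  assert (HT1a: forall t, t < T1 -> t < T0 /\ t < M /\ t < 0).
  { intros t Ht. unfold T1 in Ht. pose proof (Rmin_l (Rmin T0 M) 0). pose proof (Rmin_r (Rmin T0 M) 0).
    pose proof (Rmin_l T0 M). pose proof (Rmin_r T0 M). lra. }
  set (z := fun t => y t - 1).
  set (F := fun t => y2 t + a * y1 t + P * (y t - 1)).
  set (Rf := fun u => Rpower (1+u) p - 1 - p*u).
  assert (Fform: forall t, t < T1 -> F t = - Rf (z t) + m*m*exp(2*m*t)*(1 + z t)).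
  { intros t Ht. destruct (HT1a t Ht) as [H0 _]. destruct (HT0 t H0) as [_ [_ [_ Eq]]].
    unfold F, Rf, z. replace (1 + (y t - 1)) with (y t) by ring. fold a m in Eq.
    unfold P. simpl in Eq. lra. }
  assert (Dz: forall t, t < T1 -> derivable_pt_lim z t (y1 t)).
  { intros t Ht. destruct (HT1a t Ht) as [H0 _]. destruct (HT0 t H0) as [_ [D1 _]].
    unfold z. apply (dext (fun t => y t - 1) _ t (y1 t - 0)); [intro; reflexivity | ring |].
    apply dminus; auto. apply dconst. }
  assert (Dw: forall t, t < T1 -> derivable_pt_lim y1 t (-P * z t - a * y1 t + F t)).
  { intros t Ht. destruct (HT1a t Ht) as [H0 _]. destruct (HT0 t H0) as [_ [_ [D2 _]]].
    apply (dext y1 _ t (y2 t)); [intro; reflexivity | unfold z, F; ring | auto]. }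
  assert (Bz: forall t, t < T1 -> Rabs (z t) <= delta).
  { intros t Ht. destruct (HT1a t Ht) as [_ [H1 _]]. left. apply HM; auto. }
  assert (Hex: forall t, 0 < exp (2*m*t)) by (intro; apply exp_pos).
  assert (Hex1: forall t, t < T1 -> exp (2*m*t) <= 1).
  { intros t Ht. destruct (HT1a t Ht) as [_ [_ H2]]. rewrite <- exp_0. apply expl. nra. }
  assert (BF: forall t, t < T1 -> Rabs (F t) <= eta0 * Rabs (z t) + 2*(m*m) * exp (2*m*t)).
  { intros t Ht. rewrite Fform by auto. pose proof (Bz t Ht).
    pose proof (RQ (z t) ltac:(lra)) as Hr. fold (Rf (z t)) in Hr.
    eapply Rle_trans. apply Rabs_triang. rewrite Rabs_Ropp.
    assert (Rabs (Rf (z t)) <= eta0 * Rabs (z t)).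
    { eapply Rle_trans. apply Hr. rewrite <- absq. pose proof (Rabs_pos (z t)).
      assert (KR * Rabs (z t) <= eta0) by (eapply Rle_trans; [|apply Hdel2]; apply Rmult_le_compat_l; lra).
      nra. }
    assert (Rabs (m*m*exp(2*m*t)*(1 + z t)) <= 2*(m*m)*exp(2*m*t)).
    { rewrite Rabs_mult, Rabs_right by (pose proof (Hex t); apply Rle_ge; apply Rmult_le_pos; nra).
      pose proof (Rabs_triang 1 (z t)). rewrite Rabs_R1 in H1. pose proof (Hex t).
      assert (Rabs (1 + z t) <= 2) by lra.
      replace (2*(m*m)*exp(2*m*t)) with (m*m*exp(2*m*t)*2) by ring.
      apply Rmult_le_compat_l; auto. apply Rmult_le_pos; nra. }
    lra. }
  destruct (LD z y1 F T1 delta (2*(m*m)) (2*m) eta0 ltac:(lra) ltac:(lra) ltac:(nra) Dz Dw Bz BF)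
    as [E1 [HE1 B1]].
  set (q := fun t => z t - A * exp (2*m*t)).
  set (r := fun t => y1 t - 2*m*A * exp (2*m*t)).
  set (G := fun t => F t - m*m*exp(2*m*t)).
  assert (Dq: forall t, t < T1 -> derivable_pt_lim q t (r t)).
  { intros t Ht. unfold q, r. apply (dext (fun t => z t - A * exp (2*m*t)) _ t (y1 t - A*(2*m*exp(2*m*t))));
      [intro; reflexivity | ring |].
    apply (dminus z (fun t => A*exp(2*m*t))). auto. apply dscal. apply dexpl. }
  assert (Dr: forall t, t < T1 -> derivable_pt_lim r t (-P * q t - a * r t + G t)).
  { intros t Ht. destruct (HT1a t Ht) as [H0 _]. destruct (HT0 t H0) as [_ [_ [D2 _]]].
    unfold r. apply (dext (fun t => y1 t - 2*m*A * exp (2*m*t)) _ t (y2 t - 2*m*A*(2*m*exp(2*m*t))));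
      [intro; reflexivity | |].
    - unfold q, G, F, z. rewrite <- Hid. ring.
    - apply (dminus y1 (fun t => 2*m*A*exp(2*m*t))). auto. apply dscal. apply dexpl. }
  assert (Bq: forall t, t < T1 -> Rabs (q t) <= delta + A).
  { intros t Ht. unfold q. pose proof (Bz t Ht). pose proof (Hex1 t Ht). pose proof (Hex t).
    pose proof (Rabs_triang (z t) (- (A*exp(2*m*t)))). rewrite Rabs_Ropp in H2.
    rewrite (Rabs_right (A*exp(2*m*t))) in H2 by (apply Rle_ge; nra). unfold Rminus. nra. }
  assert (E4: forall t, exp (4*m*t) = exp (2*m*t) * exp (2*m*t)).
  { intro t. rewrite <- exp_plus. f_equal. ring. }
  assert (BG: forall t, t < T1 -> Rabs (G t) <= 0 * Rabs (q t) + (KR*(E1*E1) + m*m*E1) * exp (4*m*t)).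
  { intros t Ht. rewrite E4. unfold G. rewrite Fform by auto.
    destruct (B1 t Ht) as [_ Hz]. pose proof (Bz t Ht).
    pose proof (RQ (z t) ltac:(lra)) as Hr. fold (Rf (z t)) in Hr.
    pose proof (Hex t). set (e := exp (2*m*t)) in *.
    replace (- Rf (z t) + m * m * e * (1 + z t) - m * m * e) with (- Rf (z t) + m*m*e*z t) by ring.
    eapply Rle_trans. apply Rabs_triang. rewrite Rabs_Ropp.
    assert (Hzz: z t * z t <= (E1*e)*(E1*e)).
    { rewrite <- absq. pose proof (Rabs_pos (z t)). nra. }
    assert (Rabs (m*m*e*z t) <= m*m*E1*(e*e)).
    { rewrite Rabs_mult, Rabs_right by (apply Rle_ge; apply Rmult_le_pos; nra).
      replace (m*m*E1*(e*e)) with ((m*m*e)*(E1*e)) by ring.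
      apply Rmult_le_compat_l; nra. }
    assert (KR*(z t * z t) <= KR*((E1*e)*(E1*e))) by (apply Rmult_le_compat_l; lra).
    nra. }
  assert (HB2: 0 <= KR*(E1*E1) + m*m*E1) by nra.
  destruct (LD q r G T1 (delta + A) (KR*(E1*E1) + m*m*E1) (4*m) 0 ltac:(lra) ltac:(lra) HB2 Dq Dr Bq BG)
    as [E2 [HE2 B2]].
  exists E2, T1. intros t Ht.
  destruct (B2 t Ht) as [Hr _]. unfold r in Hr.
  fold n th D m.
  replace (m / D) with (2*m*A) by (exact H2mA).
  eapply Rle_trans. apply Hr. apply Rmult_le_compat_l; auto. apply expl.
  destruct (HT1a t Ht) as [_ [_ Ht0]].
  fold P. pose proof (Rmin_r P 1). assert (0 <= (2*m)*((-t)*(1 - Rmin P 1))) by (apply Rmult_le_pos; [lra| apply Rmult_le_pos; lra]). nra.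
Qed.
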